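(* Let $G$ be a bipartite graph with colour classes $V$ and $W$, where $\#V=v$ and $\#W=w$, and suppose $G$ contains no cycle of length $4$ and no cycle of length $6$. (i) If $w>\lfloor v^2/4\rfloor$, then at least $\lceil w-v^2/4\rceil$ vertices of $W$ have degree $0$ or $1$. (ii) If every vertex of $G$ has degree at least $2$, then $w\le\lfloor v^2/4\rfloor$ and $v\le\lfloor w^2/4\rfloor$. *)

(* Defs.v *)
From mathcomp Require Import all_boot all_order all_algebra.
Set Implicit Arguments. Unset Strict Implicit. Unset Printing Implicit Defensive.

(* A bipartite graph with colour classes V and W (finite types) is given by its
   edge relation e : V -> W -> bool (e x y = true iff x ~ y). *)

Definition degV (V W : finType) (e : V -> W -> bool) (x : V) : nat :=
  #|[set y : W | e x y]|.

Definition degW (V W : finType) (e : V -> W -> bool) (y : W) : nat :=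
  #|[set x : V | e x y]|.

Definition no_C4 (V W : finType) (e : V -> W -> bool) : Prop :=
  ~ exists (x1 x2 : V) (y1 y2 : W),
      [/\ x1 != x2, y1 != y2 &
          [&& e x1 y1, e x2 y1, e x2 y2 & e x1 y2]].

Definition no_C6 (V W : finType) (e : V -> W -> bool) : Prop :=
  ~ exists (x1 x2 x3 : V) (y1 y2 y3 : W),
      [/\ [&& x1 != x2, x2 != x3 & x1 != x3],
          [&& y1 != y2, y2 != y3 & y1 != y3] &
          [&& e x1 y1, e x2 y1, e x2 y2, e x3 y2, e x3 y3 & e x1 y3]].

(* Main.v *)
Require Import Defs.
From mathcomp Require Import all_boot all_order all_algebra.
Import Order.TTheory GRing.Theory Num.Theory.

Lemma C4lem (V W : finType) (e : V -> W -> bool) x1 x2 y1 y2 :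
  no_C4 e -> x1 != x2 -> e x1 y1 -> e x2 y1 -> e x2 y2 -> e x1 y2 -> y1 = y2.
Proof.
move=> C4 nx h1 h2 h3 h4; apply/eqP; apply/negPn/negP => ny.
apply: C4; exists x1, x2, y1, y2; split=> //; by rewrite h1 h2 h3 h4.
Qed.

Lemma agm4 c d : (4 * (c * d) <= (d + c) ^ 2)%N.
Proof. rewrite addnC; exact: (nat_AGM2 c d). Qed.

Lemma key (V W : finType) (e : V -> W -> bool) (A : {set W}) (a b : W -> V) :
  no_C4 e -> no_C6 e ->
  (forall y, y \in A -> [/\ a y != b y, e (a y) y & e (b y) y]) ->
  (4 * #|A| <= #|V| ^ 2)%N.
Proof.
move=> C4 C6 hab.
have [->|[y0 y0A]] := set_0Vmem A; first by rewrite cards0.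
pose P y := [set a y; b y].
pose S x := [set y in A | x \in P y].
pose o x y := if a y == x then b y else a y.
have [x0 _ x0max] := @arg_maxnP V (a y0) xpredT (fun x => #|S x|) isT.
set D := #|S x0|.
have oP x y : y \in A -> x \in P y -> [/\ o x y != x, e x y & e (o x y) y].
  move=> yA; rewrite !inE; case: (hab y yA) => ne ea eb.
  case/orP=> /eqP->; rewrite /o ?eqxx ?(negbTE ne) //; first by rewrite eq_sym.
have oinj : {in S x0 &, injective (o x0)}.
  move=> y1 y2 /setIdP[y1A x1P] /setIdP[y2A x2P] eq.
  have [n1 e1 f1] := oP _ _ y1A x1P; have [n2 e2 f2] := oP _ _ y2A x2P.
  apply: (@C4lem V W e x0 (o x0 y1)) => //; first by rewrite eq_sym.
  by rewrite eq.
pose N := [set o x0 y | y in S x0].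
have cN : #|N| = D by rewrite card_in_imset.
have cover y : y \in A -> exists2 x, x \in ~: N & x \in P y.
  move=> yA; case: (hab y yA) => ne ea eb.
  case: (boolP (a y \in N)) => [/imsetP[y1 y1S ay1]|]; last first.
    by move=> h; exists (a y); rewrite ?inE ?eqxx.
  case: (boolP (b y \in N)) => [/imsetP[y2 y2S by2]|]; last first.
    by move=> h; exists (b y); rewrite ?inE ?eqxx ?orbT.
  exfalso.
  move: (y1S) (y2S) => /setIdP[y1A x1P] /setIdP[y2A x2P].
  have [n1 e1 f1] := oP _ _ y1A x1P; have [n2 e2 f2] := oP _ _ y2A x2P.
  rewrite -ay1 in n1 f1; rewrite -by2 in n2 f2.
  apply: C6; exists x0, (a y), (b y), y1, y, y2; split.
  - by rewrite eq_sym n1 ne eq_sym n2.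
  - apply/and3P; split.
    + apply/eqP => E; subst y1; move: x1P; rewrite !inE.
      by rewrite !(eq_sym x0) (negbTE n1) (negbTE n2).
    + apply/eqP => E; subst y2; move: x2P; rewrite !inE.
      by rewrite !(eq_sym x0) (negbTE n1) (negbTE n2).
    + apply/eqP => E; subst y2; move: ne; by rewrite ay1 by2 eqxx.
  - by rewrite e1 f1 ea eb f2 e2.
have bound : (#|A| <= #|~: N| * D)%N.
  apply: (@leq_trans (\sum_(x in ~: N) #|S x|)); last first.
    rewrite -sum_nat_const; apply: leq_sum => x _; exact: x0max.
  apply: (@leq_trans (\sum_(y in A) \sum_(x in ~: N) (x \in P y : nat))).
    rewrite -sum1_card; apply: leq_sum => y yA.
    have [x xN xP] := cover y yA.
    by rewrite (bigD1 x) //= xP.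
  rewrite exchange_big /=; apply: leq_sum => x _.
  rewrite -sum1_card big_mkcond [X in (_ <= X)%N]big_mkcond /=.
  apply: leq_sum => y _; rewrite [y \in S x]inE; by case: (y \in A); case: (x \in P y).
have cC := cardsC N; rewrite cN in cC.
rewrite -cC.
have h : (4 * (#|~: N| * D) <= (D + #|~: N|) ^ 2)%N.
  exact: agm4.
apply: leq_trans h; by rewrite leq_mul2l bound.
Qed.

Lemma W2bound (V W : finType) (e : V -> W -> bool) :
  no_C4 e -> no_C6 e -> (4 * #|[set y | (2 <= degW e y)%N]| <= #|V| ^ 2)%N.
Proof.
move=> C4 C6.
case: (pickP (fun _ : V => true)) => [xd _|V0]; last first.
  have -> : [set y | (2 <= degW e y)%N] = set0.
    apply/setP => y; rewrite !inE /degW.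
    have : (#|[set x | e x y]| <= #|V|)%N by apply: max_card.
    by rewrite (eq_card0 V0) leqn0 => /eqP->.
  by rewrite cards0.
pose s y := enum [set x | e x y].
apply: (@key V W e _ (fun y => nth xd (s y) 0) (fun y => nth xd (s y) 1) C4 C6).
move=> y; rewrite inE /degW cardE -/(s y) => h.
have u : uniq (s y) by apply: enum_uniq.
split.
- by rewrite nth_uniq // (leq_trans _ h).
- have := mem_nth xd (leq_trans (isT : 0 < 2)%N h).
  by rewrite mem_enum inE.
- have := mem_nth xd h. by rewrite mem_enum inE.
Qed.

Lemma swapC4 (V W : finType) (e : V -> W -> bool) :
  no_C4 e -> no_C4 (fun y x => e x y).
Proof.
move=> C4 [y1 [y2 [x1 [x2 [ny nx /and4P[h1 h2 h3 h4]]]]]].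
apply: C4; exists x1, x2, y1, y2; split => //.
by rewrite h1 h4 h3 h2.
Qed.

Lemma swapC6 (V W : finType) (e : V -> W -> bool) :
  no_C6 e -> no_C6 (fun y x => e x y).
Proof.
move=> C6 [y1 [y2 [y3 [x1 [x2 [x3 [/and3P[a1 a2 a3] /and3P[b1 b2 b3] /and3P[h1 h2 /and4P[h3 h4 h5 h6]]]]]]]]].
apply: C6; exists x1, x3, x2, y1, y3, y2; split.
- by rewrite b3 eq_sym b2 b1.
- by rewrite a3 eq_sym a2 a1.
- by rewrite h1 h6 h5 h4 h3 h2.
Qed.

Theorem proposition2p2 (V W : finType) (e : V -> W -> bool) :
  no_C4 e -> no_C6 e ->
  ((#|V| ^ 2 %/ 4 < #|W|)%N ->
     (Num.ceil ((#|W|%:R - (#|V| ^ 2)%:R / 4%:R) : rat)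
        <= (#|[set y : W | (degW e y <= 1)%N]| : int))%R)
  /\
  ((forall x : V, (2 <= degV e x)%N) -> (forall y : W, (2 <= degW e y)%N) ->
     (#|W| <= #|V| ^ 2 %/ 4)%N /\ (#|V| <= #|W| ^ 2 %/ 4)%N).
Proof.
move=> C4 C6; split.
  move=> _.
  have B := @W2bound V W e C4 C6.
  set W2 := [set y | (2 <= degW e y)%N] in B.
  have -> : [set y | (degW e y <= 1)%N] = ~: W2.
    by apply/setP => y; rewrite !inE leqNgt.
  have cC := cardsC W2.
  have -> : #|~: W2| = (#|W| - #|W2|)%N by rewrite -cC addKn.
  rewrite ceil_le_int.
  have -> : (((#|W| - #|W2|)%N%:Z)%:~R = (#|W| - #|W2|)%N%:R :> rat)%R by [].
  rewrite natrB; last by rewrite -cC leq_addr.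
  have : ((4 * #|W2|)%N%:R <= (#|V| ^ 2)%N%:R :> rat)%R by rewrite ler_nat.
  rewrite natrM.
  move=> h; rewrite lerD2l lerN2 ler_pdivlMr ?ltr0n // mulrC //.
move=> hV hW; split; rewrite leq_divRL // mulnC.
  have := @W2bound V W e C4 C6.
  have -> : [set y | (2 <= degW e y)%N] = setT by apply/setP => y; rewrite !inE hW.
  by rewrite cardsT.
have := @W2bound W V (fun y x => e x y) (@swapC4 V W e C4) (@swapC6 V W e C6).
have -> : [set y | (2 <= degW (fun y x => e x y) y)%N] = setT.
  by apply/setP => y; rewrite !inE; exact: hV.
by rewrite cardsT.
Qed.
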